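(* Let $X$ be an $n$-dimensional projective space over an arbitrary field, and let $K$ be a $k$-dimensional subspace of $X$, where $-1\le k\le\min\{\frac{n-1}{2},n-3\}$. Let $\mathcal B_K$ be a $(2,1)$-blocking set in $K$ and let $\mathcal B_{X/K}$ be a $(2,1)$-blocking set in $X/K$. Then there exist, for every point $P$ of $K$, a hyperplane $H_P$ of $X$ with $K\subseteq H_P$, such that, letting $\mathcal B_{X/P}$ be the set of lines of $X$ through $P$ contained in $H_P$ (a $(1,0)$-blocking set in $X/P$), the disjoint union $$\mathcal B:=\{T\in\mathrm{Gr}_1(X):\langle K,T\rangle\in\mathcal B_{X/K}\}\ \cup\ \bigcup_{P\in\mathrm{Gr}_0(K)}\bigl(\mathcal B_{X/P}\setminus\{\text{lines of }K\text{ through }P\}\bigr)\ \cup\ \mathcal B_K$$ is a $(2,1)$-blocking set in $X$.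
   Context: Projective dimension is used; $\mathrm{Gr}_d(Y)$ is the set of $d$-dimensional subspaces of a projective space $Y$ (points: $d=0$, lines: $d=1$). For a $k$-dimensional subspace $K$ of $X$, the quotient space $X/K$ is the projective space of dimension $\dim X-k-1$ whose $r$-dimensional subspaces are the $(r+k+1)$-dimensional subspaces of $X$ containing $K$; $\langle K,T\rangle$ (the span) is regarded as an element of $X/K$. In particular, for a point $P$, points of $X/P$ are lines of $X$ through $P$ and lines of $X/P$ are planes of $X$ through $P$. For $-1\le t\le s$, an $(s,t)$-blocking set in a projective space $Y$ is a set of $t$-dimensional subspaces of $Y$ such that every $s$-dimensional subspace of $Y$ contains at least one of them. Thus a $(2,1)$-blocking set is a set of lines meeting the condition that every plane contains one of them. *)

(* Defs.v *)
(* Projective geometry modelled by linear algebra: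
   the n-dimensional projective space X over a field F is the lattice of
   subspaces of the vector space 'rV[F]_(n.+1) = F^(n+1); a projective
   subspace of projective dimension d is a vspace of (vector) dimension d+1
   (so the empty subspace, dim -1, is 0%VS; points have \dim 1, lines \dim 2). *)
From HB Require Import structures.
From mathcomp Require Import all_boot all_order all_algebra.
Set Implicit Arguments. Unset Strict Implicit. Unset Printing Implicit Defensive.
Import GRing.Theory.
Local Open Scope ring_scope.

(* Blocking sets in the quotient/interval geometry [L, Y]:
   for subspaces L <= Y, the projective space Y/L has as its r-dimensional
   subspaces the (r + k + 1)-dimensional subspaces U of Y containing L,
   where k = projective dim of L; in vector dimensions:
   \dim U = \dim L + (r+1).
   [qblocking L Y s t B]: B is an (s,t)-blocking set in Y/L, i.e. B is a
   set of t-dimensional subspaces of Y/L such that every s-dimensional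
   subspace of Y/L contains at least one element of B.
   With L = 0 this is an (s,t)-blocking set in the projective space Y itself. *)
Definition qblocking (F : fieldType) (vT : vectType F) (L Y : {vspace vT})
    (s t : nat) (B : {vspace vT} -> Prop) : Prop :=
  (forall U, B U -> [/\ (L <= U)%VS, (U <= Y)%VS & \dim U = (\dim L + t.+1)%N]) /\
  (forall S, (L <= S)%VS -> (S <= Y)%VS -> \dim S = (\dim L + s.+1)%N ->
     exists U, B U /\ (U <= S)%VS).

(* Main.v *)
Require Import Defs.
From HB Require Import structures.
From mathcomp Require Import all_boot all_order all_algebra.
From mathcomp Require Import zify ring.
Set Implicit Arguments. Unset Strict Implicit. Unset Printing Implicit Defensive.
Import GRing.Theory.
Local Open Scope ring_scope.

Section Gen.
Variables (F : fieldType) (vT : vectType F).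
Implicit Types (P W T : {vspace vT}).

Lemma add_line_dim P (v : vT) : v \notin P -> \dim (P + <[v]>)%VS = (\dim P).+1.
Proof.
move=> vP.
have v0 : v != 0 by apply: contra vP => /eqP ->; rewrite mem0v.
have := dimv_sum_cap P <[v]>; rewrite dim_vline v0.
suff -> : \dim (P :&: <[v]>)%VS = 0%N by rewrite addn0 addn1.
apply/eqP; rewrite dimv_eq0 -subv0; apply/subvP => w; rewrite memv0 memv_cap.
move=> /andP[wP /vlineP[c wc]].
apply/eqP; rewrite wc; case: (eqVneq c 0) => [->|c0]; first by rewrite scale0r.
by move: wP; rewrite wc => /(memvZ c^-1); rewrite scalerA mulVf // scale1r (negPf vP).
Qed.

Lemma not_subv_ex W P : ~~ (W <= P)%VS -> exists2 v, v \in W & v \notin P.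
Proof.
move=> nWP; case: (boolP (all (fun v => v \in P) (vbasis W))) => [/allP hall|].
  by move: nWP; rewrite -(span_basis (vbasisP W)); move/span_subvP: hall => ->.
by case/allPn => v vb vP; exists v => //; apply: vbasis_mem.
Qed.

Lemma ext_sub j : forall P W, (P <= W)%VS -> (\dim P + j <= \dim W)%N ->
  exists T, [/\ (P <= T)%VS, (T <= W)%VS & \dim T = (\dim P + j)%N].
Proof.
elim: j => [|j IH] P W PW hd; first by exists P; rewrite addn0 subvv.
have nWP : ~~ (W <= P)%VS.
  by apply/negP => /dimvS; lia.
case: (not_subv_ex nWP) => v vW vP.
have PW' : (P + <[v]> <= W)%VS by rewrite subv_add PW -memvE.
have := IH (P + <[v]>)%VS W PW'; rewrite add_line_dim //.
case=> [|T [h1 h2 h3]]; first by lia.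
exists T; split => //; last by lia.
exact: subv_trans (addvSl _ _) h1.
Qed.
End Gen.
Section Constr.
Variables (F : fieldType) (n : nat) (K : {vspace 'rV[F]_n.+1}).
Local Notation V := 'rV[F]_n.+1.
Local Notation k := (\dim K).
Local Notation m := (\dim (K^C)%VS).
Hypothesis hkm : (k <= m)%N.

Definition ebas := [tuple of vbasis K ++ vbasis (K^C)%VS].

Lemma ebas_basis : basis_of fullv ebas.
Proof.
rewrite -(addv_complf K); apply: cat_basis; last 2 first.
- exact: vbasisP.
- exact: vbasisP.
by apply/directv_addP; exact: capv_compl.
Qed.

Lemma ebas_free : free ebas.
Proof. exact: basis_free ebas_basis. Qed.

Lemma ebas_l (i : 'I_k) : ebas`_(lshift m i) = (vbasis K)`_i.
Proof. by rewrite /= nth_cat size_tuple /= ltn_ord. Qed.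

Definition bidx (i : 'I_k) : 'I_(k + m) := rshift k (widen_ord hkm i).

Lemma coordK x j : x \in K ->
  coord ebas j x = \sum_(i < k) coord (vbasis K) i x * (lshift m i == j)%:R.
Proof.
move=> xK; rewrite {1}(coord_vbasis xK) linear_sum; apply: eq_bigr => i _.
by rewrite linearZ /= -ebas_l coord_free ?ebas_free.
Qed.

Lemma coordK_r x i : x \in K -> coord ebas (bidx i) x = 0.
Proof.
move=> xK; rewrite coordK // big1 // => j _.
by rewrite /bidx eq_lrshift mulr0.
Qed.

Lemma coordK_l x i : x \in K -> coord ebas (lshift m i) x = coord (vbasis K) i x.
Proof.
move=> xK; rewrite coordK // (bigD1 i) //= eqxx mulr1 big1 ?addr0 // => j ji.
by rewrite (eq_shift.1.1.1) (negPf ji) mulr0.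
Qed.

Definition gf (p w : V) : F :=
  \sum_(i < k) coord ebas (lshift m i) p * coord ebas (bidx i) w.

Definition psi (p : V) : 'Hom(V, F^o) :=
  \sum_(i < k) coord ebas (lshift m i) p *: linfun (coord ebas (bidx i) : V -> F^o).

Lemma psiE p w : psi p w = gf p w.
Proof.
rewrite /psi sum_lfunE; apply: eq_bigr => i _.
by rewrite scale_lfunE lfunE.
Qed.

Definition Hdef (P : {vspace V}) : {vspace V} := lker (psi (vpick P)).

Lemma memH P w : (w \in Hdef P) = (gf (vpick P) w == 0).
Proof. by rewrite /Hdef memv_ker psiE. Qed.

Lemma gf_lin a b p q w : gf (a *: p + b *: q) w = a * gf p w + b * gf q w.
Proof.
rewrite /gf !mulr_sumr -big_split; apply: eq_bigr => i _ /=.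
rewrite linearD !linearZ /=; ring.
Qed.

Lemma K_sub_H P : (K <= Hdef P)%VS.
Proof.
apply/subvP => x xK; rewrite memH /gf big1 // => i _.
by rewrite coordK_r // mulr0.
Qed.

Lemma bidx_eq i j : (bidx i == bidx j) = (i == j).
Proof.
rewrite /bidx eq_shift.1.1.2; apply/eqP/eqP => [/(congr1 val)/= h|-> //].
exact: val_inj.
Qed.

Lemma dimVV : \dim (fullv : {vspace V}) = n.+1.
Proof. by rewrite dimvf /dim /= mul1n. Qed.

Lemma dimH P : \dim P = 1%N -> (P <= K)%VS -> \dim (Hdef P) = n.
Proof.
move=> dP PK.
set p := vpick P.
have pK : p \in K by exact: (subvP PK _ (memv_pick P)).
have p0 : p != 0.
  by rewrite vpick0 -dimv_eq0 dP.
have [i ci] : exists i, coord ebas (lshift m i) p != 0.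
  case: (boolP [exists i, coord ebas (lshift m i) p != 0]) => [/existsP //|/existsPn hn].
  move: p0; rewrite (coord_vbasis pK) big1 ?eqxx // => j _.
  by have := hn j; rewrite negbK coordK_l // => /eqP ->; rewrite scale0r.
have := limg_ker_dim (psi p) fullv; rewrite capfv dimVV.
suff -> : \dim (psi p @: fullv)%VS = 1%N by rewrite /Hdef -/p addn1 => -[].
apply/eqP; rewrite eqn_leq; apply/andP; split.
  by have := dimvS (subvf (psi p @: fullv)%VS); rewrite dimvf.
rewrite lt0n dimv_eq0; apply/negP => /eqP h0.
have := memv_img (psi p) (memvf (ebas`_(bidx i))); rewrite h0 memv0 psiE /gf.
rewrite (bigD1 i) // big1 ?addr0.
  by rewrite coord_free ?ebas_free // eqxx mulr1 /= addr0 (negPf ci).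
by move=> j ji; rewrite coord_free ?ebas_free // bidx_eq eq_sym (negPf ji) mulr0.
Qed.
End Constr.

Theorem theorem3p29 (F : fieldType) (n : nat) (K : {vspace 'rV[F]_n.+1})
    (hk1 : (2 * \dim K <= n.+1)%N) (hk2 : (\dim K + 2 <= n)%N)
    (BK BXK : {vspace 'rV[F]_n.+1} -> Prop)
    (hBK : qblocking 0%VS K 2 1 BK)
    (hBXK : qblocking K fullv 2 1 BXK) :
  exists H : {vspace 'rV[F]_n.+1} -> {vspace 'rV[F]_n.+1},
    (forall P : {vspace 'rV[F]_n.+1}, \dim P = 1%N -> (P <= K)%VS ->
       \dim (H P) = n /\ (K <= H P)%VS) /\
    qblocking 0%VS fullv 2 1
      (fun T : {vspace 'rV[F]_n.+1} =>
         (\dim T = 2%N /\ BXK (K + T)%VS)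
         \/ (exists P : {vspace 'rV[F]_n.+1},
               [/\ \dim P = 1%N, (P <= K)%VS, \dim T = 2%N, (P <= T)%VS &
                   (T <= H P)%VS] /\ ~ (T <= K)%VS)
         \/ BK T).
Proof.
have hkm : (\dim K <= \dim (K^C)%VS)%N.
  by rewrite dimv_compl dimVV; lia.
exists (Hdef hkm); split.
  by move=> P dP PK; split; [exact: dimH | exact: K_sub_H].
case: hBK => hBK1 hBK2; case: hBXK => hBXK1 hBXK2.
rewrite /qblocking dimv0 !add0n; split.
  move=> T hT; split; [exact: sub0v | exact: subvf |].
  case: hT => [[dT _] //|[hT|hT]].
    by case: hT => P [[_ _ dT _ _] _].
  by case: (hBK1 T hT); rewrite dimv0.
move=> S _ _ dS.
have dSK : (\dim (S :&: K)%VS <= 3)%N by rewrite -dS dimvS ?capvSl.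
have [d0|[d1|[d2|d3]]] : \dim (S :&: K)%VS = 0%N \/ \dim (S :&: K)%VS = 1%N \/
   \dim (S :&: K)%VS = 2%N \/ \dim (S :&: K)%VS = 3%N by lia.
-
  have dKS : \dim (K + S)%VS = (\dim K + 3)%N.
    by have := dimv_sum_cap K S; rewrite capvC d0 dS; lia.
  have [U [BU US]] := hBXK2 (K + S)%VS (addvSl _ _) (subvf _) dKS.
  have [KU _ dU] := hBXK1 U BU.
  have USKS : (U + S <= K + S)%VS by rewrite subv_add US addvSr.
  have dUS : (2 <= \dim (U :&: S)%VS)%N.
    by have := dimv_sum_cap U S; have := dimvS USKS; lia.
  have h2 : (\dim (0%VS : {vspace 'rV[F]_n.+1}) + 2 <= \dim (U :&: S)%VS)%N by rewrite dimv0.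
  have [T [_ TUS dT]] := ext_sub (sub0v (U :&: S)%VS) h2.
  rewrite dimv0 add0n in dT.
  have TU : (T <= U)%VS := subv_trans TUS (capvSl _ _).
  have TS : (T <= S)%VS := subv_trans TUS (capvSr _ _).
  exists T; split => //; left; split => //.
  suff -> : (K + T)%VS = U by [].
  apply/eqP; rewrite eqEdim subv_add KU TU /=.
  have dKT : (\dim (K :&: T)%VS <= 0)%N.
    have : (K :&: T <= S :&: K)%VS.
      by rewrite subv_cap capvSl (subv_trans (capvSr _ _) TS).
    by move/dimvS; rewrite d0.
  by have := dimv_sum_cap K T; lia.
-
  set P := (S :&: K)%VS.
  have PK : (P <= K)%VS by apply: capvSr.
  have dH : \dim (Hdef hkm P) = n := dimH hkm d1 PK.
  have KH := K_sub_H hkm P.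
  have dSH : (2 <= \dim (S :&: Hdef hkm P)%VS)%N.
    by have := dimv_sum_cap S (Hdef hkm P); have := dimvS (subvf (S + Hdef hkm P)%VS); rewrite dimVV; lia.
  have PSH : (P <= S :&: Hdef hkm P)%VS by rewrite subv_cap capvSl (subv_trans PK KH).
  have h1 : (\dim P + 1 <= \dim (S :&: Hdef hkm P)%VS)%N by rewrite /P d1.
  have [T [PT TSH dT]] := ext_sub PSH h1.
  exists T; split; last exact: subv_trans TSH (capvSl _ _).
  right; left; exists P; split; first split => //.
  + by rewrite dT d1.
  + exact: subv_trans TSH (capvSr _ _).
  + move=> TK.
    have : (T <= P)%VS by rewrite subv_cap TK (subv_trans TSH (capvSl _ _)).
    by move/dimvS; rewrite dT d1.
-
  set L := (S :&: K)%VS.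
  have LK : (L <= K)%VS by apply: capvSr.
  have LS : (L <= S)%VS by apply: capvSl.
  have nSK : ~~ (S <= K)%VS.
    by apply/negP => /capv_idPl SK; move: d2; rewrite /L SK dS.
  have [v vS vK] := not_subv_ex nSK.
  set p := vpick L.
  have pL : p \in L by apply: memv_pick.
  have p0 : p != 0 by rewrite vpick0 -dimv_eq0 d2.
  have nLp : ~~ (L <= <[p]>)%VS.
    by apply/negP => /dimvS; rewrite dim_vline p0 d2.
  have [q qL qp] := not_subv_ex nLp.
  have [r [rL r0 grv]] : exists r, [/\ r \in L, r != 0 & gf hkm r v = 0].
    case: (eqVneq (gf hkm p v) 0) => [hp|hp].
      by exists p; split.
    exists (gf hkm q v *: p + (- gf hkm p v) *: q); split.
    + by rewrite memvD // memvZ.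
    + apply/negP => /eqP h.
      apply: (negP qp).
      have -> : q = ((gf hkm p v)^-1 * gf hkm q v) *: p.
        apply: (scalerI hp); rewrite scalerA mulrA divff // mul1r.
        by move/eqP: h; rewrite scaleNr addr_eq0 opprK => /eqP ->.
      by rewrite memvZ // memv_line.
    + by rewrite gf_lin; ring.
  set P := <[r]>%VS.
  have dP : \dim P = 1%N by rewrite dim_vline r0.
  have PK : (P <= K)%VS by rewrite -memvE; exact: (subvP LK).
  have vH : v \in Hdef hkm P.
    rewrite memH; have /vlineP [c ->] := memv_pick P.
    by have := gf_lin hkm c 0 r r v; rewrite scale0r addr0 grv => ->; rewrite mulr0 mul0r addr0.
  have vP : v \notin P by apply: contra vK; apply: (subvP PK).
  exists (P + <[v]>)%VS; split.
    right; left; exists P; split; first split => //.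
    + by rewrite add_line_dim // dP.
    + exact: addvSl.
    + by rewrite subv_add -memvE vH (subv_trans PK (K_sub_H hkm P)).
    + by move=> /subvP /(_ v (subvP (addvSr _ _) v (memv_line v))); apply/negP.
  by rewrite subv_add -memvE vS andbT; apply: subv_trans LS; rewrite -memvE.
-
  have SK : (S <= K)%VS.
    have : (S :&: K)%VS = S by apply/eqP; rewrite eqEdim capvSl d3 dS.
    by move/capv_idPl.
  have dS' : \dim S = (\dim (0%VS : {vspace 'rV[F]_n.+1}) + 3)%N by rewrite dimv0 dS.
  have [U [BU US]] := hBK2 S (sub0v _) SK dS'.
  by exists U; split => //; right; right.
Qed.
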